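(* Let $V$ be an operator space which is $\lambda$-subcoexact for some $\lambda<\infty$. If $\boldsymbol{K}$ is a completely compact matrix set in $V$, then $\boldsymbol{K}$ is operator compact.
   Context: Operator spaces are abstract (matrix normed) operator spaces. $\mathcal{T}_n$ denotes the trace class operators on $\mathbb{C}^n$ with the operator space structure of the dual of $M_n$; quotients carry the quotient operator space structure. For finite dimensional operator spaces $X,Y$, $d_{cb}(X,Y)=\inf\{\|\varphi\|_{cb}\|\varphi^{-1}\|_{cb}:\varphi:X\to Y \text{ a complete isomorphism}\}$. A finite dimensional operator space $X$ is $\lambda$-coexact if for every $\varepsilon>0$ there are $n$ and a subspace $W\subseteq\mathcal{T}_n$ with $d_{cb}(X,\mathcal{T}_n/W)<\lambda+\varepsilon$. An operator space $V$ is $\lambda$-subcoexact if every finite dimensional subspace of $V$ is contained in a finite dimensional subspace of $V$ which is $\lambda$-coexact. A matrix set $\boldsymbol{K}=(K_n)$ in $V$ is a sequence of subsets $K_n\subseteq M_n(V)$; closed if each $K_n$ is closed; completely bounded if $\sup\{\|x\|_n:x\in K_n,n\in\mathbb{N}\}<\infty$. $\boldsymbol{K}$ is completely compact if it is closed, completely bounded, and for every $\varepsilon>0$ there is a finite dimensional subspace $V_\varepsilon\subseteq V$ such that every $x\in K_n$ (any $n$) lies within distance $<\varepsilon$ of $M_n(V_\varepsilon)$. $\mathcal{K}$ denotes the compact operators on $\ell^2$, $\mathcal{K}(V)=\mathcal{K}\check{\otimes}V$ (operator-space minimal tensor product, the completion of $M_\infty(V)$, finitely supported infinite matrices over $V$).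 $\mathcal{T}$ is the trace class on $\ell^2$ as the operator space dual of $\mathcal{K}$, $M_k(\mathcal{T})\cong\mathcal{CB}(\mathcal{K},M_k)$ with norm $\|\cdot\|_{\mathcal{T}}$, $M_\infty\subseteq\mathcal{T}$, and $(\sigma\otimes\mathrm{id})(x)\in M_k(V)$ is the slice map for $\sigma\in M_k(\mathcal{T})$, $x\in\mathcal{K}(V)$. The absolutely matrix convex hull of $x\in\mathcal{K}(V)$ has $k$-th level $\{(\sigma\otimes\mathrm{id})(x):\sigma\in M_k(M_\infty),\|\sigma\|_{\mathcal{T}}\le1\}$. $\boldsymbol{K}$ is operator compact if it is closed and there is $x\in\mathcal{K}(V)$ with each $K_k$ contained in the closure of the $k$-th level of the absolutely matrix convex hull of $x$. *)

(* Defs.v *)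
From HB Require Import structures.
From mathcomp Require Import all_boot all_order all_algebra.
From mathcomp Require Import all_classical all_reals.
From mathcomp Require Import complex.

Set Implicit Arguments.
Unset Strict Implicit.
Unset Printing Implicit Defensive.

Import Order.TTheory GRing.Theory Num.Theory.
Local Open Scope ring_scope.
Local Open Scope classical_set_scope.

Section OperatorSpaces.
Variable R : realType.
Local Notation C := R[i].

Definition sqmod (z : C) : R := (@complex.Re R z) ^+ 2 + (@complex.Im R z) ^+ 2.

Definition opnormF (I J : finType) (A : I -> J -> C) : R :=
  sup [set t | exists v : J -> C,
         \sum_j sqmod (v j) <= 1 /\
         t = Num.sqrt (\sum_i sqmod (\sum_j A i j * v j))].

Definition opnorm (m n : nat) (A : 'M[C]_(m, n)) : R :=
  opnormF (fun (i : 'I_m) (j : 'I_n) => A i j).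

(** norm of M_r(M_p) = M_(r p) (C) *)
Definition blknorm (r p : nat) (B : 'M['M[C]_p]_r) : R :=
  opnormF (fun (i : 'I_r * 'I_p) (j : 'I_r * 'I_p) => B i.1 j.1 i.2 j.2).

Definition lmulmx (V : lmodType C) (n m p : nat) (a : 'M[C]_(n, m)) (x : 'M[V]_(m, p))
  : 'M[V]_(n, p) := \matrix_(i, j) \sum_k a i k *: x k j.
Definition rmulmx (V : lmodType C) (n m p : nat) (x : 'M[V]_(n, m)) (b : 'M[C]_(m, p))
  : 'M[V]_(n, p) := \matrix_(i, j) \sum_k b k j *: x i k.

(** Ruan's axioms: an (abstract, matrix normed) operator space structure on V *)
Definition is_opspace (V : lmodType C) (mn : forall n, 'M[V]_n -> R) : Prop :=
  [/\ (forall n (x : 'M[V]_n), 0 <= mn n x),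
      (forall n (x : 'M[V]_n), mn n x = 0 -> x = 0),
      (forall n (x y : 'M[V]_n), mn n (x + y) <= mn n x + mn n y),
      (forall n m (a : 'M[C]_(n, m)) (x : 'M[V]_m) (b : 'M[C]_(m, n)),
          mn n (rmulmx (lmulmx a x) b) <= opnorm a * mn m x * opnorm b) &
      (forall m n (x : 'M[V]_m) (y : 'M[V]_n),
          mn (m + n) (block_mx x 0 0 y) = Num.max (mn m x) (mn n y))].

(** T_n: the trace class on C^n, realised as 'M[C]_n, acting on M_n by the
    pairing <tau, A> = sum_{a,b} tau_ab A_ab.  The norm of
    tau in M_m(T_n) is the cb norm of the map M_n -> M_m, A |-> [<tau_pq, A>]. *)
Definition pairing (n : nat) (tau A : 'M[C]_n) : C := \sum_a \sum_b tau a b * A a b.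

Definition normMT (n m : nat) (tau : 'M['M[C]_n]_m) : R :=
  sup [set t | exists r (X : 'M['M[C]_n]_r),
         blknorm X <= 1 /\
         t = blknorm (\matrix_(i, j) \matrix_(p, q) pairing (tau p q) (X i j)
                       : 'M['M[C]_m]_r)].

Definition span (V : lmodType C) (s : seq V) : set V :=
  [set v | exists c : 'I_(size s) -> C, v = \sum_i c i *: s`_i].

(** A complete isomorphism X -> T_n/W is encoded by the (linear, surjective onto X)
    map q : T_n -> V with kernel W inducing its inverse T_n/W -> X; the quotient
    matrix norm on M_m(T_n/W) is inf_{w in M_m(W)} ||tau + w||. *)
Definition coexact (V : lmodType C) (mn : forall n, 'M[V]_n -> R) (lam : R) (X : set V) : Prop :=
  forall eps : R, 0 < eps ->
  exists n (q : {linear 'M[C]_n -> V}) (a b : R),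
    range q = X /\
    [/\ 0 <= a, 0 <= b, a * b < lam + eps,
        (* ||phi^-1||_cb <= b *)
        (forall m (tau : 'M['M[C]_n]_m), mn m (map_mx q tau) <= b * normMT tau) &
        (* ||phi||_cb <= a *)
        (forall m (y : 'M[V]_m), (forall i j, X (y i j)) ->
           forall delta : R, 0 < delta ->
           exists tau : 'M['M[C]_n]_m, map_mx q tau = y /\ normMT tau < a * mn m y + delta)].

Definition subcoexact (V : lmodType C) (mn : forall n, 'M[V]_n -> R) (lam : R) : Prop :=
  forall s0 : seq V, exists s : seq V, span s0 `<=` span s /\ coexact mn lam (span s).

Definition mxset (V : lmodType C) := forall n, set 'M[V]_n.

Definition mclosed (V : lmodType C) (mn : forall n, 'M[V]_n -> R) (K : mxset V) : Prop :=
  forall n (y : 'M[V]_n),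
    (forall eps : R, 0 < eps -> exists x, K n x /\ mn n (x - y) < eps) -> K n y.

Definition cbounded (V : lmodType C) (mn : forall n, 'M[V]_n -> R) (K : mxset V) : Prop :=
  exists M : R, forall n x, K n x -> mn n x <= M.

Definition completely_compact (V : lmodType C) (mn : forall n, 'M[V]_n -> R) (K : mxset V) : Prop :=
  [/\ mclosed mn K, cbounded mn K &
      forall eps : R, 0 < eps -> exists s : seq V,
        forall n x, K n x -> exists z : 'M[V]_n,
          (forall i j, span s (z i j)) /\ mn n (x - z) < eps].

(** Elements of K(V): Cauchy sequences (u_j) in M_infty(V) (finitely supported
    infinite matrices, u_j supported in [0, N_j)^2), norms being computed in
    any M_N(V) containing the supports. *)
Definition trunc (V : lmodType C) (N : nat) (f : nat -> nat -> V) : 'M[V]_N :=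
  \matrix_(a < N, b < N) f a b.

Definition KV_seq (V : lmodType C) (mn : forall n, 'M[V]_n -> R)
    (N : nat -> nat) (u : nat -> nat -> nat -> V) : Prop :=
  (forall j a b, (N j <= a)%N || (N j <= b)%N -> u j a b = 0) /\
  (forall eps : R, 0 < eps -> exists J, forall i j, (J <= i)%N -> (J <= j)%N ->
     mn (maxn (N i) (N j)) (trunc (maxn (N i) (N j)) (fun a b => u i a b - u j a b)) < eps).

(** slice map (sigma (x) id)(u_j) for sigma in M_k(M_infty), sigma supported in M x M *)
Definition slice (V : lmodType C) (k M : nat) (sigma : 'M['M[C]_M]_k) (uj : nat -> nat -> V)
  : 'M[V]_k := \matrix_(p, q) \sum_(a < M) \sum_(b < M) sigma p q a b *: uj a b.

(** y lies in the closure of the k-th level of the absolutely matrix convex hull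
    of x = lim_j u_j: for every eps there is sigma in M_k(M_infty) with
    ||sigma||_T <= 1 and ||(sigma (x) id)(x) - y|| < eps (expressed via the
    approximants u_j, as (sigma (x) id) is contractive). *)
Definition in_hull_closure (V : lmodType C) (mn : forall n, 'M[V]_n -> R)
    (u : nat -> nat -> nat -> V) (k : nat) (y : 'M[V]_k) : Prop :=
  forall eps : R, 0 < eps -> exists M (sigma : 'M['M[C]_M]_k),
    normMT sigma <= 1 /\
    exists J, forall j, (J <= j)%N -> mn k (slice sigma (u j) - y) < eps.

Definition operator_compact (V : lmodType C) (mn : forall n, 'M[V]_n -> R) (K : mxset V) : Prop :=
  mclosed mn K /\
  exists (N : nat -> nat) (u : nat -> nat -> nat -> V),
    KV_seq mn N u /\ forall k y, K k y -> in_hull_closure mn u y.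

End OperatorSpaces.

(* Main.v *)
Require Import Defs.
From HB Require Import structures.
From mathcomp Require Import all_boot all_order all_algebra.
From mathcomp Require Import all_classical all_reals.
From mathcomp Require Import complex.
From mathcomp Require Import ring lra.
Set Implicit Arguments.
Unset Strict Implicit.
Unset Printing Implicit Defensive.
Import Order.TTheory GRing.Theory Num.Theory.
Local Open Scope ring_scope.
Local Open Scope classical_set_scope.
Section S.
Variable R : realType.
Local Notation C := R[i].
Lemma sqmod_ge0 (z : C) : 0 <= sqmod z.
Proof. rewrite /sqmod; apply: addr_ge0; apply: sqr_ge0. Qed.
Lemma sqmodD (x y : C) : sqmod (x + y) = sqmod x + sqmod y +
   2 * (complex.Re x * complex.Re y + complex.Im x * complex.Im y).
Proof. case: x => a b; case: y => c d; rewrite /sqmod /=. ring. Qed.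
Lemma sqmodM (x y : C) : sqmod (x * y) = sqmod x * sqmod y.
Proof. case: x => a b; case: y => c d; rewrite /sqmod /=. ring. Qed.
Lemma sqmodN (x : C) : sqmod (- x) = sqmod x.
Proof. case: x => a b; rewrite /sqmod /=. ring. Qed.
Lemma sqmod0 : sqmod (0 : C) = 0.
Proof. rewrite /sqmod /=. ring. Qed.
Lemma sqmodR (c : R) : sqmod ((c%:C)%C) = c ^+ 2.
Proof. rewrite /sqmod /=. ring. Qed.
Lemma sqmodZ (t : R) (x y : C) : sqmod (x + (t%:C)%C * y) = sqmod x + 2 * t *
   (complex.Re x * complex.Re y + complex.Im x * complex.Im y) + t ^+ 2 * sqmod y.
Proof. case: x => a b; case: y => c d; rewrite /sqmod /=. ring. Qed.
End S.

Section S2.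
Variable R : realType.
Local Notation C := R[i].
Local Notation Re := (@complex.Re R).
Local Notation Im := (@complex.Im R).

Lemma sum_sqmod_ge0 (I : finType) (x : I -> C) : 0 <= \sum_i sqmod (x i).
Proof. by apply: sumr_ge0 => i _; apply: sqmod_ge0. Qed.

Lemma CS (I : finType) (x y : I -> C) :
  (\sum_i (Re (x i) * Re (y i) + Im (x i) * Im (y i))) ^+ 2 <=
  (\sum_i sqmod (x i)) * (\sum_i sqmod (y i)).
Proof.
set S := \sum_i _; set P := \sum_i sqmod (x i); set Q := \sum_i sqmod (y i).
have H t : 0 <= P + 2 * t * S + t ^+ 2 * Q.
  have : 0 <= \sum_i sqmod (x i + (t%:C)%C * y i) by apply: sum_sqmod_ge0.
  under eq_bigr do rewrite sqmodZ.
  by rewrite big_split big_split /= -!mulr_sumr.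
have Q0 : 0 <= Q by apply: sum_sqmod_ge0.
have P0 : 0 <= P by apply: sum_sqmod_ge0.
case: (ltrgtP Q 0) => [|QP|Q0']; first by rewrite ltNge Q0.
  have := H (- (S / Q)).
  have E : S = (S / Q) * Q by rewrite mulfVK // gt_eqF.
  set t := S / Q in E *; rewrite E. nra.
case: (eqVneq S 0) => [->|SN].
  by rewrite expr0n /= Q0' mulr0.
have := H (- (P + 1) / (2 * S)).
have -> : 2 * (- (P + 1) / (2 * S)) * S = - (P + 1) by field; rewrite SN.
rewrite Q0' mulr0 addr0; lra.
Qed.

Lemma minkowski (I : finType) (x y : I -> C) :
  Num.sqrt (\sum_i sqmod (x i + y i)) <=
  Num.sqrt (\sum_i sqmod (x i)) + Num.sqrt (\sum_i sqmod (y i)).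
Proof.
under eq_bigr do rewrite sqmodD.
rewrite big_split big_split /= -mulr_sumr.
have := CS x y.
set S := \sum_i _; set P := \sum_i sqmod (x i); set Q := \sum_i sqmod (y i).
move=> HC.
have Q0 : 0 <= Q by apply: sum_sqmod_ge0.
have P0 : 0 <= P by apply: sum_sqmod_ge0.
have SP : S <= Num.sqrt P * Num.sqrt Q.
  rewrite -sqrtrM //.
  case: (lerP S 0) => [S0|S0]; first by apply: le_trans S0 (sqrtr_ge0 _).
  by rewrite -(ger0_norm (ltW S0)) -sqrtr_sqr ler_sqrt // mulr_ge0.
have sP := sqrtr_ge0 P; have sQ := sqrtr_ge0 Q.
rewrite -[X in _ <= X]ger0_norm ?addr_ge0 // -sqrtr_sqr ler_sqrt ?sqr_ge0 //.
rewrite sqrrD !sqr_sqrtr //. lra.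
Qed.
End S2.

Section S3.
Variable R : realType.
Local Notation C := R[i].

Lemma minkowski_seq (K : Type) (I' : finType) (s : seq K) (f : K -> I' -> C) :
  Num.sqrt (\sum_i sqmod (\sum_(k <- s) f k i)) <=
  \sum_(k <- s) Num.sqrt (\sum_i sqmod (f k i)).
Proof.
elim: s => [|k s IH].
  under eq_bigr do rewrite big_nil sqmod0.
  by rewrite big1 // sqrtr0 big_nil.
under eq_bigr do rewrite big_cons.
rewrite big_cons; apply: le_trans (minkowski _ _) _.
by rewrite lerD2l.
Qed.

Definition oset (I J : finType) (A : I -> J -> C) : set R :=
  [set t | exists v : J -> C,
         \sum_j sqmod (v j) <= 1 /\
         t = Num.sqrt (\sum_i sqmod (\sum_j A i j * v j))].

Lemma opnormFE (I J : finType) (A : I -> J -> C) : opnormF A = sup (oset A).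
Proof. by []. Qed.

Lemma oset_n0 (I J : finType) (A : I -> J -> C) : oset A !=set0.
Proof.
exists 0; exists (fun _ => 0); split.
  by rewrite big1 ?ler01 // => j _; rewrite sqmod0.
rewrite big1 ?sqrtr0 // => i _; rewrite big1 ?sqmod0 // => j _; by rewrite mulr0.
Qed.

Lemma oset_ub (I J : finType) (A : I -> J -> C) :
  ubound (oset A) (\sum_j Num.sqrt (\sum_i sqmod (A i j))).
Proof.
move=> t [v [Hv ->]].
have Hs : forall i, \sum_j A i j * v j = \sum_(j <- index_enum J) A i j * v j by [].
apply: le_trans (minkowski_seq _ _) _.
apply: ler_sum => j _.
rewrite ler_sqrt; last by apply: sum_sqmod_ge0.
apply: ler_sum => i _; rewrite sqmodM -[X in _ <= X]mulr1 ler_wpM2l ?sqmod_ge0 //.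
apply: le_trans Hv; rewrite (bigD1 j) //= lerDl.
by apply: sumr_ge0 => k _; apply: sqmod_ge0.
Qed.

Lemma oset_hasub (I J : finType) (A : I -> J -> C) : has_ubound (oset A).
Proof. by exists (\sum_j Num.sqrt (\sum_i sqmod (A i j))); apply: oset_ub. Qed.

Lemma opnormF_ub (I J : finType) (A : I -> J -> C) (v : J -> C) :
  \sum_j sqmod (v j) <= 1 ->
  Num.sqrt (\sum_i sqmod (\sum_j A i j * v j)) <= opnormF A.
Proof. by move=> Hv; apply: (ub_le_sup (oset_hasub A)); exists v. Qed.

Lemma opnormF_leP (I J : finType) (A : I -> J -> C) (c : R) :
  (forall v : J -> C, \sum_j sqmod (v j) <= 1 ->
    Num.sqrt (\sum_i sqmod (\sum_j A i j * v j)) <= c) -> opnormF A <= c.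
Proof. move=> H; apply: ge_sup; first exact: oset_n0. move=> t [v [Hv Ht]]. rewrite Ht. exact: H. Qed.

Lemma opnormF_ge0 (I J : finType) (A : I -> J -> C) : 0 <= opnormF A.
Proof.
have [t [v [Hv _]]] := oset_n0 A; apply: le_trans (opnormF_ub A Hv).
exact: sqrtr_ge0.
Qed.

Lemma opnormF_cmp (I J I' J' : finType) (A : I -> J -> C) (A' : I' -> J' -> C) :
  (forall v' : J' -> C, \sum_j sqmod (v' j) <= 1 -> exists v : J -> C,
     \sum_j sqmod (v j) <= 1 /\
     \sum_i sqmod (\sum_j A' i j * v' j) <= \sum_i sqmod (\sum_j A i j * v j)) ->
  opnormF A' <= opnormF A.
Proof.
move=> H; apply: opnormF_leP => v' /H [v [Hv Hle]].
apply: le_trans (opnormF_ub A Hv); rewrite ler_sqrt //; exact: sum_sqmod_ge0.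
Qed.

Lemma opnormF_sum (I J : finType) (K : Type) (s : seq K) (F : K -> I -> J -> C) :
  opnormF (fun i j => \sum_(k <- s) F k i j) <= \sum_(k <- s) opnormF (F k).
Proof.
apply: opnormF_leP => v Hv.
have E : forall i, \sum_j (\sum_(k <- s) F k i j) * v j =
   \sum_(k <- s) \sum_j F k i j * v j.
  by move=> i; rewrite exchange_big /=; apply: eq_bigr => j _; rewrite mulr_suml.
under eq_bigr do rewrite E.
apply: le_trans (minkowski_seq _ _) _.
by apply: ler_sum => k _; apply: opnormF_ub.
Qed.

Lemma opnormF_add (I J : finType) (A B : I -> J -> C) :
  opnormF (fun i j => A i j + B i j) <= opnormF A + opnormF B.
Proof.
apply: opnormF_leP => v Hv.
have E : forall i, \sum_j (A i j + B i j) * v j =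
   \sum_j A i j * v j + \sum_j B i j * v j.
  by move=> i; rewrite -big_split; apply: eq_bigr => j _; rewrite mulrDl.
under eq_bigr do rewrite E.
apply: le_trans (minkowski _ _) _.
by apply: lerD; apply: opnormF_ub.
Qed.

Lemma opnormF_scale (I J : finType) (A : I -> J -> C) (c : C) :
  opnormF (fun i j => c * A i j) <= Num.sqrt (sqmod c) * opnormF A.
Proof.
apply: opnormF_leP => v Hv.
have E : forall i, \sum_j c * A i j * v j = c * \sum_j A i j * v j.
  by move=> i; rewrite mulr_sumr; apply: eq_bigr => j _; rewrite mulrA.
under eq_bigr do rewrite E sqmodM.
rewrite -mulr_sumr sqrtrM ?sqmod_ge0 // ler_wpM2l ?sqrtr_ge0 //.
exact: opnormF_ub.
Qed.

Lemma opnormF0 (I J : finType) : opnormF (fun (i : I) (j : J) => (0 : C)) <= 0.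
Proof.
apply: opnormF_leP => v _; rewrite big1 ?sqrtr0 // => i _.
by rewrite big1 ?sqmod0 // => j _; rewrite mul0r.
Qed.
End S3.

Section S4.
Variable R : realType.
Local Notation C := R[i].

Lemma sum_pair (V : nmodType) (I J : finType) (F : I * J -> V) :
  \sum_(p : I * J) F p = \sum_i \sum_j F (i, j).
Proof. by rewrite pair_bigA; apply: eq_bigr => [[i j]]. Qed.

Lemma sum_delta (V : nmodType) (T : finType) (k0 : T) (F : T -> V) :
  \sum_k (if k == k0 then F k else 0) = F k0.
Proof. by rewrite -big_mkcond big_pred1_eq. Qed.

Lemma sqmod_if (b : bool) (x : C) : sqmod (if b then x else 0) = if b then sqmod x else 0.
Proof. by case: b; rewrite ?sqmod0. Qed.

Lemma sum_le1 (I J : finType) (v : I * J -> C) (q : J) :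
  \sum_i sqmod (v (i, q)) <= \sum_p sqmod (v p).
Proof.
rewrite sum_pair; apply: ler_sum => i _.
rewrite (bigD1 q) //= lerDl; apply: sumr_ge0 => k _; exact: sqmod_ge0.
Qed.

Lemma place (r n m : nat) (X : 'M['M[C]_n]_r) (p q : 'I_m) (a b : 'I_n) :
  opnormF (fun (i j : 'I_r * 'I_m) =>
     if (i.2 == p) && (j.2 == q) then X i.1 j.1 a b else 0) <= blknorm X.
Proof.
apply: opnormF_cmp => v' Hv'.
exists (fun jb : 'I_r * 'I_n => if jb.2 == b then v' (jb.1, q) else 0); split.
  rewrite sum_pair /=.
  under eq_bigr do under eq_bigr do rewrite sqmod_if.
  under eq_bigr do rewrite sum_delta.
  by apply: le_trans Hv'; apply: sum_le1.
have HL : forall i p', \sum_(jq : 'I_r * 'I_m)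
    (if (p' == p) && (jq.2 == q) then X i jq.1 a b else 0) * v' jq =
    if p' == p then \sum_j X i j a b * v' (j, q) else 0.
  move=> i p'; case: eqP => _ /=; last by rewrite big1 // => jq _; rewrite mul0r.
  rewrite sum_pair; apply: eq_bigr => j _ /=.
  under eq_bigr do rewrite (fun_if (fun x => x * _)) mul0r.
  by rewrite sum_delta.
have HR : forall i a', \sum_(jb : 'I_r * 'I_n)
    X i jb.1 a' jb.2 * (if jb.2 == b then v' (jb.1, q) else 0) =
    \sum_j X i j a' b * v' (j, q).
  move=> i a'; rewrite sum_pair; apply: eq_bigr => j _ /=.
  under eq_bigr do rewrite (fun_if (fun x => X i j a' _ * x)) mulr0.
  by rewrite sum_delta.
rewrite sum_pair [X in _ <= X]sum_pair /=.
apply: ler_sum => i _.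
under eq_bigr do rewrite HL sqmod_if.
under [X in _ <= X]eq_bigr do rewrite HR.
rewrite sum_delta (bigD1 a) //= lerDl; apply: sumr_ge0 => k _; exact: sqmod_ge0.
Qed.

Definition Ymx (n m r : nat) (tau : 'M['M[C]_n]_m) (X : 'M['M[C]_n]_r) : 'M['M[C]_m]_r :=
  \matrix_(i, j) \matrix_(p, q) pairing (tau p q) (X i j).

Definition nset (n m : nat) (tau : 'M['M[C]_n]_m) : set R :=
  [set t | exists r (X : 'M['M[C]_n]_r), blknorm X <= 1 /\ t = blknorm (Ymx tau X)].

Lemma normMTE (n m : nat) (tau : 'M['M[C]_n]_m) : normMT tau = sup (nset tau).
Proof. by []. Qed.

Lemma blknorm_Y (n m r : nat) (tau : 'M['M[C]_n]_m) (X : 'M['M[C]_n]_r) :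
  blknorm (Ymx tau X) = opnormF (fun i j => pairing (tau i.2 j.2) (X i.1 j.1)).
Proof.
by rewrite /blknorm; congr opnormF; apply/funext => i; apply/funext => j; rewrite !mxE.
Qed.

Lemma nset_ub (n m : nat) (tau : 'M['M[C]_n]_m) :
  ubound (nset tau) (\sum_p \sum_q \sum_a \sum_b Num.sqrt (sqmod (tau p q a b))).
Proof.
move=> t [r [X [HX ->]]]; rewrite blknorm_Y.
have E : (fun i j : 'I_r * 'I_m => pairing (tau i.2 j.2) (X i.1 j.1)) =
   (fun i j => \sum_p \sum_q \sum_a \sum_b (tau p q a b *
        (if (i.2 == p) && (j.2 == q) then X i.1 j.1 a b else 0))).
  apply/funext => i; apply/funext => j.
  rewrite [RHS](bigD1 i.2) // [X in _ = _ _ X]big1 => [|p /negPf Hp]; last first.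
    by apply: big1 => q _; apply: big1 => a _; apply: big1 => b _; rewrite eq_sym Hp mulr0.
  rewrite Monoid.mulm1 (bigD1 j.2) // [X in _ = _ _ X]big1 => [|q /negPf Hq]; last first.
    by apply: big1 => a _; apply: big1 => b _; rewrite [j.2 == q]eq_sym Hq andbF mulr0.
  by rewrite Monoid.mulm1 !eqxx /pairing; apply: eq_bigr => a _; apply: eq_bigr => b _.
rewrite E; apply: le_trans (opnormF_sum _ _) _; apply: ler_sum => p _.
apply: le_trans (opnormF_sum _ _) _; apply: ler_sum => q _.
apply: le_trans (opnormF_sum _ _) _; apply: ler_sum => a _.
apply: le_trans (opnormF_sum _ _) _; apply: ler_sum => b _.
apply: le_trans (opnormF_scale _ _) _.
rewrite -[X in _ <= X]mulr1 ler_wpM2l ?sqrtr_ge0 //.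
by apply: le_trans (place _ _ _ _ _) HX.
Qed.

Lemma nset_n0 (n m : nat) (tau : 'M['M[C]_n]_m) : nset tau !=set0.
Proof.
exists (blknorm (Ymx tau (0 : 'M['M[C]_n]_0))); exists 0, 0; split => //.
by apply: opnormF_leP => v _; rewrite big1 ?sqrtr0 ?ler01 // => -[[]].
Qed.

Lemma normMT_ub (n m r : nat) (tau : 'M['M[C]_n]_m) (X : 'M['M[C]_n]_r) :
  blknorm X <= 1 -> blknorm (Ymx tau X) <= normMT tau.
Proof.
move=> HX; apply: (ub_le_sup _); last by exists r, X.
by eexists; apply: nset_ub.
Qed.

Lemma normMT_leP (n m : nat) (tau : 'M['M[C]_n]_m) (c : R) :
  (forall r (X : 'M['M[C]_n]_r), blknorm X <= 1 -> blknorm (Ymx tau X) <= c) ->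
  normMT tau <= c.
Proof.
move=> H; apply: ge_sup; first exact: nset_n0.
by move=> t [r [X [HX ->]]]; apply: H.
Qed.

Lemma normMT_ge0 (n m : nat) (tau : 'M['M[C]_n]_m) : 0 <= normMT tau.
Proof.
apply: le_trans (normMT_ub tau (X := 0 : 'M['M[C]_n]_0) _).
  exact: opnormF_ge0.
by apply: opnormF_leP => v _; rewrite big1 ?sqrtr0 ?ler01 // => -[[]].
Qed.
End S4.

Section S5.
Variable R : realType.
Local Notation C := R[i].

Lemma split_l m n (i : 'I_m) : fintype.split (lshift n i) = inl i.
Proof. exact: (unsplitK (inl i)). Qed.
Lemma split_r m n (i : 'I_n) : fintype.split (rshift m i) = inr i.
Proof. exact: (unsplitK (inr i)). Qed.

Lemma compress_ul (r n1 n2 : nat) (X : 'M['M[C]_(n1 + n2)]_r) :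
  blknorm (\matrix_(i, j) ulsubmx (X i j)) <= blknorm X.
Proof.
apply: opnormF_cmp => v' Hv'.
exists (fun jb : 'I_r * 'I_(n1 + n2) =>
  match fintype.split jb.2 with inl b1 => v' (jb.1, b1) | inr _ => 0 end); split.
  apply: le_trans Hv'; rewrite sum_pair [X in _ <= X]sum_pair /=.
  apply: ler_sum => j _; rewrite [X in X <= _]big_split_ord /=.
  rewrite [X in _ + X <= _]big1 => [|b _]; last by rewrite split_r sqmod0.
  by rewrite addr0 le_eqVlt; apply/orP; left; apply/eqP; apply: eq_bigr => b _; rewrite split_l.
rewrite sum_pair [X in _ <= X]sum_pair /=; apply: ler_sum => i _.
rewrite [X in _ <= X]big_split_ord /= -[X in X <= _]addr0 lerD //; last first.
  by apply: sumr_ge0 => k _; apply: sqmod_ge0.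
apply: ler_sum => a _; rewrite le_eqVlt; apply/orP; left; apply/eqP; congr sqmod.
rewrite !sum_pair; apply: eq_bigr => j _ /=; rewrite big_split_ord /=.
rewrite [X in _ = _ + X]big1 ?addr0 => [|b _]; last by rewrite split_r mulr0.
by apply: eq_bigr => b _; rewrite split_l !mxE.
Qed.

Lemma compress_dr (r n1 n2 : nat) (X : 'M['M[C]_(n1 + n2)]_r) :
  blknorm (\matrix_(i, j) drsubmx (X i j)) <= blknorm X.
Proof.
apply: opnormF_cmp => v' Hv'.
exists (fun jb : 'I_r * 'I_(n1 + n2) =>
  match fintype.split jb.2 with inl _ => 0 | inr b2 => v' (jb.1, b2) end); split.
  apply: le_trans Hv'; rewrite sum_pair [X in _ <= X]sum_pair /=.
  apply: ler_sum => j _; rewrite [X in X <= _]big_split_ord /=.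
  rewrite [X in X + _ <= _]big1 => [|b _]; last by rewrite split_l sqmod0.
  by rewrite add0r le_eqVlt; apply/orP; left; apply/eqP; apply: eq_bigr => b _; rewrite split_r.
rewrite sum_pair [X in _ <= X]sum_pair /=; apply: ler_sum => i _.
rewrite [X in _ <= X]big_split_ord /= -[X in X <= _]add0r lerD //.
  by apply: sumr_ge0 => k _; apply: sqmod_ge0.
apply: ler_sum => a _; rewrite le_eqVlt; apply/orP; left; apply/eqP; congr sqmod.
rewrite !sum_pair; apply: eq_bigr => j _ /=; rewrite big_split_ord /=.
rewrite [X in _ = X + _]big1 ?add0r => [|b _]; last by rewrite split_l mulr0.
by apply: eq_bigr => b _; rewrite split_r !mxE.
Qed.

Lemma pairing_block (n1 n2 : nat) (a : 'M[C]_n1) (b : 'M[C]_n2) (Z : 'M[C]_(n1 + n2)) :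
  pairing (block_mx a 0 0 b) Z = pairing a (ulsubmx Z) + pairing b (drsubmx Z).
Proof.
rewrite /pairing big_split_ord /=; congr (_ + _).
  apply: eq_bigr => i _; rewrite big_split_ord /= [X in _ + X]big1 ?addr0.
    by apply: eq_bigr => j _; rewrite block_mxEul !mxE.
  by move=> j _; rewrite block_mxEur mxE mul0r.
apply: eq_bigr => i _; rewrite big_split_ord /= [X in X + _]big1 ?add0r.
  by apply: eq_bigr => j _; rewrite block_mxEdr !mxE.
by move=> j _; rewrite block_mxEdl mxE mul0r.
Qed.

Lemma normMT_block (k n1 n2 : nat) (A : 'M['M[C]_n1]_k) (B : 'M['M[C]_n2]_k) :
  normMT (\matrix_(p, q) block_mx (A p q) 0 0 (B p q)) <= normMT A + normMT B.
Proof.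
apply: normMT_leP => r X HX; rewrite blknorm_Y.
under eq_fun do under eq_fun do rewrite mxE pairing_block.
apply: le_trans (opnormF_add _ _) _; apply: lerD.
  have := normMT_ub A (le_trans (compress_ul X) HX).
  by rewrite blknorm_Y; under eq_fun do under eq_fun do rewrite mxE.
have := normMT_ub B (le_trans (compress_dr X) HX).
by rewrite blknorm_Y; under eq_fun do under eq_fun do rewrite mxE.
Qed.

Lemma sqrt_sqmodR (c : R) : 0 <= c -> Num.sqrt (sqmod ((c%:C)%C)) = c.
Proof. by move=> c0; rewrite sqmodR sqrtr_sqr ger0_norm. Qed.

Lemma normMT_scale (k n : nat) (A : 'M['M[C]_n]_k) (c : R) : 0 <= c ->
  normMT (\matrix_(p, q) ((c%:C)%C *: A p q)) <= c * normMT A.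
Proof.
move=> c0; apply: normMT_leP => r X HX; rewrite blknorm_Y.
have E : forall (M : 'M[C]_n) Z, pairing ((c%:C)%C *: M) Z = (c%:C)%C * pairing M Z.
  move=> M Z; rewrite /pairing mulr_sumr; apply: eq_bigr => a _.
  by rewrite mulr_sumr; apply: eq_bigr => b _; rewrite mxE mulrA.
under eq_fun do under eq_fun do rewrite mxE E.
apply: le_trans (opnormF_scale _ _) _; rewrite sqrt_sqmodR // ler_wpM2l //.
by have := normMT_ub A HX; rewrite blknorm_Y.
Qed.

Lemma normMT_id (n : nat) (c : R) : 0 <= c ->
  normMT (\matrix_(p, q) ((c%:C)%C *: delta_mx p q) : 'M['M[C]_n]_n) <= c.
Proof.
move=> c0; apply: normMT_leP => r X HX; rewrite blknorm_Y.
have E : forall (p q : 'I_n) Z, pairing ((c%:C)%C *: delta_mx p q) Z = (c%:C)%C * Z p q.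
  move=> p q Z; rewrite /pairing (bigD1 p) // [X in _ _ X = _]big1 => [|a /negPf Ha]; last first.
    by apply: big1 => b _; rewrite !mxE Ha /= mulr0 mul0r.
  rewrite Monoid.mulm1 (bigD1 q) // [X in _ _ X = _]big1 => [|b /negPf Hb]; last first.
    by rewrite !mxE Hb andbF /= mulr0 mul0r.
  by rewrite Monoid.mulm1 !mxE !eqxx /= mulr1.
under eq_fun do under eq_fun do rewrite mxE E.
apply: le_trans (opnormF_scale _ _) _; rewrite sqrt_sqmodR //.
by rewrite -[X in _ <= X]mulr1 ler_wpM2l.
Qed.

Lemma normMT_0 (k : nat) (A : 'M['M[C]_0]_k) : normMT A <= 0.
Proof.
apply: normMT_leP => r X HX; rewrite blknorm_Y.
under eq_fun do under eq_fun do rewrite /pairing big_ord0.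
exact: opnormF0.
Qed.
End S5.

Section S6.
Variable R : realType.
Local Notation C := R[i].
Variable V : lmodType C.
Variable mn : forall n, 'M[V]_n -> R.
Hypothesis Hos : is_opspace mn.

Lemma mn_ge0 n (x : 'M[V]_n) : 0 <= mn x.
Proof. by case: Hos. Qed.

Lemma mn_triangle n (x y : 'M[V]_n) : mn (x + y) <= mn x + mn y.
Proof. by case: Hos. Qed.

Lemma mn_block m n (x : 'M[V]_m) (y : 'M[V]_n) :
  mn (block_mx x 0 0 y) = Num.max (mn x) (mn y).
Proof. by case: Hos. Qed.

Lemma opnorm_scalar n (c : C) : opnorm (c%:M : 'M[C]_n) <= Num.sqrt (sqmod c).
Proof.
apply: opnormF_leP => v Hv.
have E : forall i, \sum_j (c%:M : 'M[C]_n) i j * v j = c * v i.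
  move=> i; rewrite (bigD1 i) //= big1 => [|j /negPf Hj]; last first.
    by rewrite mxE eq_sym Hj mulr0n mul0r.
  by rewrite addr0 mxE eqxx mulr1n.
under eq_bigr do rewrite E sqmodM.
rewrite -mulr_sumr sqrtrM ?sqmod_ge0 // -[X in _ <= X]mulr1 ler_wpM2l ?sqrtr_ge0 //.
by rewrite -sqrtr1 ler_sqrt ?ler01.
Qed.

Lemma sum_scalar_l n (c : C) (i : 'I_n) (f : 'I_n -> V) :
  \sum_l ((c%:M : 'M[C]_n) i l) *: f l = c *: f i.
Proof.
rewrite (bigD1 i) //= big1 => [|l /negPf Hl]; last by rewrite mxE eq_sym Hl mulr0n scale0r.
by rewrite addr0 mxE eqxx mulr1n.
Qed.

Lemma sum_scalar_r n (c : C) (j : 'I_n) (f : 'I_n -> V) :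
  \sum_l ((c%:M : 'M[C]_n) l j) *: f l = c *: f j.
Proof.
rewrite (bigD1 j) //= big1 => [|l /negPf Hl]; last by rewrite mxE Hl mulr0n scale0r.
by rewrite addr0 mxE eqxx mulr1n.
Qed.

Lemma mn_scalar n (c : C) (x : 'M[V]_n) :
  mn (map_mx ( *:%R c) x) <= Num.sqrt (sqmod c) * mn x.
Proof.
case: Hos => _ _ _ H4 _.
have := H4 n n (c%:M) x (1%:M).
have -> : rmulmx (lmulmx (c%:M) x) 1%:M = map_mx ( *:%R c) x.
  apply/matrixP => i j; rewrite !mxE sum_scalar_r scale1r mxE sum_scalar_l.
  by [].

move=> H; apply: le_trans H _.
have h1 := opnorm_scalar n c.
have h2 : opnorm (1%:M : 'M[C]_n) <= 1.
  have := opnorm_scalar n 1.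
  by rewrite /sqmod /= expr0n /= addr0 expr1n sqrtr1.
have g1 : 0 <= opnorm (c%:M : 'M[C]_n) by apply: opnormF_ge0.
have g2 : 0 <= opnorm (1%:M : 'M[C]_n) by apply: opnormF_ge0.
have m0 := mn_ge0 x.
apply: (@le_trans _ _ (opnorm (c%:M : 'M[C]_n) * mn x * 1)).
  by rewrite ler_wpM2l // mulr_ge0.
by rewrite mulr1 ler_wpM2r.
Qed.

Lemma mn0 n : mn (0 : 'M[V]_n) = 0.
Proof.
apply/eqP; rewrite eq_le mn_ge0 andbT.
have := mn_scalar 0 (0 : 'M[V]_n); rewrite (_ : map_mx _ _ = 0); last by apply/matrixP => i j; rewrite !mxE scale0r.
 rewrite sqmod0 sqrtr0 mul0r //.
Qed.

Lemma mn_opp n (x : 'M[V]_n) : mn (- x) = mn x.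
Proof.
have H : forall y : 'M[V]_n, mn (- y) <= mn y.
  move=> y; have := mn_scalar (-1) y; rewrite (_ : map_mx _ _ = - y); last by apply/matrixP => i j; rewrite !mxE scaleN1r.
  by rewrite sqmodN /sqmod /= expr0n /= addr0 expr1n sqrtr1 mul1r.
by apply/eqP; rewrite eq_le H /= -{1}(opprK x) H.
Qed.

Lemma mn_sub n (x y : 'M[V]_n) : mn (x - y) <= mn x + mn y.
Proof. by apply: le_trans (mn_triangle _ _) _; rewrite mn_opp. Qed.

Lemma mn_subC n (x y : 'M[V]_n) : mn (x - y) = mn (y - x).
Proof. by rewrite -mn_opp opprB. Qed.
End S6.

Section S7.
Variable R : realType.
Local Notation C := R[i].
Variable V : lmodType C.

Lemma spanP (s : seq V) (v : V) :
  Defs.span s v <-> exists cn : nat -> C, v = \sum_(0 <= i < size s) cn i *: s`_i.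
Proof.
split.
  move=> [c ->]; exists (fun k => if insub k is Some i then c i else 0).
  by rewrite big_mkord; apply: eq_bigr => i _; rewrite valK.
by move=> [cn ->]; exists (fun i => cn (val i)); rewrite big_mkord.
Qed.

Lemma span0 (s : seq V) : Defs.span s 0.
Proof. by apply/spanP; exists (fun _ => 0); rewrite big1 // => i _; rewrite scale0r. Qed.

Lemma spanB (s : seq V) (v w : V) : Defs.span s v -> Defs.span s w -> Defs.span s (v - w).
Proof.
move=> [c1 ->] [c2 ->]; exists (fun i => c1 i - c2 i).
by rewrite -sumrB; apply: eq_bigr => i _; rewrite scalerBl.
Qed.

Lemma span_catl (s1 s2 : seq V) : Defs.span s1 `<=` Defs.span (s1 ++ s2).
Proof.
move=> v /spanP [cn ->]; apply/spanP.
exists (fun k => if (k < size s1)%N then cn k else 0).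
rewrite size_cat (big_cat_nat _ (leq_addr _ _)) //= [X in _ = _ + X]big_nat_cond.
rewrite [X in _ = _ + X]big1 ?addr0 => [|i /andP[/andP[Hi _] _]]; last first.
  by rewrite ltnNge Hi scale0r.
by apply: eq_big_nat => i /andP[_ Hi]; rewrite Hi nth_cat Hi.
Qed.

Lemma span_catr (s1 s2 : seq V) : Defs.span s2 `<=` Defs.span (s1 ++ s2).
Proof.
move=> v /spanP [cn ->]; apply/spanP.
exists (fun k => if (k < size s1)%N then 0 else cn (k - size s1)%N).
rewrite size_cat (big_cat_nat _ (leq_addr _ _)) //= [X in _ = X + _]big_nat_cond.
rewrite [X in _ = X + _]big1 ?add0r => [|i /andP[/andP[_ Hi] _]]; last first.
  by rewrite Hi scale0r.
rewrite -{1}[size s1]add0n big_addn addKn.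
apply: eq_big_nat => i _; rewrite ltnNge leq_addl /= addnK nth_cat ltnNge leq_addl /=.
by rewrite addnK.
Qed.
End S7.

Section Main.
Local Unset Implicit Arguments.
Variable R : realType.
Local Notation C := R[i].
Variable V : lmodType C.
Variable mn : forall n, 'M[V]_n -> R.
Hypothesis Hos : is_opspace mn.
Variable lam : R.
Hypothesis Hlam : subcoexact mn lam.
Variable K : mxset V.
Variable Mb : R.
Hypothesis HMb0 : 0 <= Mb.
Hypothesis HMb : forall n x, K n x -> mn n x <= Mb.
Hypothesis Hcc : forall eps : R, 0 < eps -> exists s : seq V,
        forall n x, K n x -> exists z : 'M[V]_n,
          (forall i j, Defs.span s (z i j)) /\ mn n (x - z) < eps.

Definition LL : R := `|lam| + 1.
Lemma LL_gt0 : 0 < LL.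
Proof. by rewrite /LL ltr_wpDl. Qed.
Lemma lam_LL : lam + 1 <= LL.
Proof. by rewrite /LL lerD2r ler_norm. Qed.

Definition ee (l : nat) : R := (2 ^+ l)^-1.
Lemma ee_gt0 l : 0 < ee l.
Proof. by rewrite /ee invr_gt0 exprn_gt0. Qed.
Lemma ee_S l : ee l = 2 * ee l.+1.
Proof. by rewrite /ee exprS invfM mulrA mulfV ?mul1r // pnatr_eq0. Qed.
Lemma ee_le1 l : ee l <= 1.
Proof. rewrite /ee invf_le1; first by rewrite exprn_ege1 // ler1n. by rewrite exprn_gt0. Qed.

Definition eps l : R := ee l ^+ 3 / (LL + 1).
Lemma eps_gt0 l : 0 < eps l.
Proof. by rewrite /eps divr_gt0 ?exprn_gt0 ?ee_gt0 // ltr_wpDl ?ltW ?LL_gt0. Qed.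

Definition Sq l : seq V := projT1 (cid (Hcc _ (eps_gt0 l))).
Lemma Sq_prop l : forall n x, K n x -> exists z : 'M[V]_n,
          (forall i j, Defs.span (Sq l) (z i j)) /\ mn n (x - z) < eps l.
Proof. exact: projT2 (cid (Hcc _ (eps_gt0 l))). Qed.

Definition Fs (s0 : seq V) : seq V := projT1 (cid (Hlam s0)).
Lemma Fs_prop s0 : Defs.span s0 `<=` Defs.span (Fs s0) /\ coexact mn lam (Defs.span (Fs s0)).
Proof. exact: projT2 (cid (Hlam s0)). Qed.

Fixpoint tq l : seq V := if l is l'.+1 then Fs (Sq l ++ tq l') else Fs (Sq 0).

Lemma span_St l : Defs.span (Sq l) `<=` Defs.span (tq l).
Proof.
case: l => [|l] /=; first by case: (Fs_prop (Sq 0)).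
by move=> v /span_catl H; case: (Fs_prop (Sq l.+1 ++ tq l)) => H1 _; apply: H1.
Qed.

Lemma span_tt l : Defs.span (tq l) `<=` Defs.span (tq l.+1).
Proof. by move=> v /span_catr H; case: (Fs_prop (Sq l.+1 ++ tq l)) => H1 _; apply: H1. Qed.

Lemma coex l : coexact mn lam (Defs.span (tq l)).
Proof. by case: l => [|l] /=; [case: (Fs_prop (Sq 0)) | case: (Fs_prop (Sq l.+1 ++ tq l))]. Qed.

Record cdata := CData { cn : nat; cqm : {linear 'M[C]_cn -> V}; ca : R; cb : R }.

Definition cprop l (D : cdata) : Prop :=
    [/\ 0 <= ca D, 0 <= cb D, ca D * cb D < lam + 1,
        (forall m (tau : 'M['M[C]_(cn D)]_m), mn m (map_mx (cqm D) tau) <= cb D * normMT tau) &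
        (forall m (y : 'M[V]_m), (forall i j, Defs.span (tq l) (y i j)) ->
           forall delta : R, 0 < delta ->
           exists tau : 'M['M[C]_(cn D)]_m, map_mx (cqm D) tau = y /\
              normMT tau < ca D * mn m y + delta)].

Lemma cdata_ex l : exists D, cprop l D.
Proof.
have [n [q [a [b [_ H]]]]] := coex l 1 ltr01.
by exists (CData n q a b).
Qed.

Definition DD l : cdata := projT1 (cid (cdata_ex l)).
Definition nn l : nat := cn (DD l).
Definition qm l : {linear 'M[C]_(nn l) -> V} := cqm (DD l).
Definition aa l : R := ca (DD l).
Definition bb l : R := cb (DD l).
Lemma q_prop l :
    [/\ 0 <= aa l, 0 <= bb l, aa l * bb l < lam + 1,
        (forall m (tau : 'M['M[C]_(nn l)]_m), mn m (map_mx (qm l) tau) <= bb l * normMT tau) &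
        (forall m (y : 'M[V]_m), (forall i j, Defs.span (tq l) (y i j)) ->
           forall delta : R, 0 < delta ->
           exists tau : 'M['M[C]_(nn l)]_m, map_mx (qm l) tau = y /\
              normMT tau < aa l * mn m y + delta)].
Proof. exact: (projT2 (cid (cdata_ex l))). Qed.

Definition BB l : R := if l is l'.+1 then eps l' + eps l else Mb + 1.
Definition dd l : R := ee l ^+ 3 / (bb l + 1).
Definition cc l : R := 2 ^+ l.+1 * (aa l * BB l + dd l).

Lemma BB_ge0 l : 0 <= BB l.
Proof. by case: l => [|l] /=; [rewrite addr_ge0 | rewrite addr_ge0 // ltW ?eps_gt0]. Qed.
Lemma dd_gt0 l : 0 < dd l.
Proof.
case: (q_prop l) => _ b0 _ _ _.
by rewrite /dd divr_gt0 ?exprn_gt0 ?ee_gt0 // ltr_wpDl.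
Qed.
Lemma cc_gt0 l : 0 < cc l.
Proof.
case: (q_prop l) => a0 _ _ _ _.
by rewrite /cc mulr_gt0 ?exprn_gt0 // ltr_wpDl ?dd_gt0 // mulr_ge0 ?BB_ge0.
Qed.

Definition EE l : 'M['M[C]_(nn l)]_(nn l) :=
  \matrix_(p, q) (((cc l)%:C)%C *: delta_mx p q).
Definition Xb l : 'M[V]_(nn l) := map_mx (qm l) (EE l).

Lemma Xb_bound l : mn _ (Xb l) <= bb l * cc l.
Proof.
case: (q_prop l) => _ b0 _ H _.
apply: le_trans (H _ _) _; rewrite ler_wpM2l //.
exact: normMT_id (ltW (cc_gt0 l)).
Qed.

Lemma Xb_E l (a b : 'I_(nn l)) : Xb l a b = (cc l)%:C%C *: qm l (delta_mx a b).
Proof. by rewrite /Xb !mxE linearZ. Qed.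

Fixpoint NN J : nat := if J is J'.+1 then (NN J' + nn J')%N else 0%N.

Fixpoint UU J : 'M[V]_(NN J) :=
  match J as J0 return 'M[V]_(NN J0) with
  | 0 => 0
  | J'.+1 => block_mx (UU J') 0 0 (Xb J')
  end.

Definition mxf (n : nat) (M : 'M[V]_n) (a b : nat) : V :=
  if (insub a : option 'I_n) is Some i then
    (if (insub b : option 'I_n) is Some j then M i j else 0) else 0.

Lemma mxf_E n (M : 'M[V]_n) (i j : 'I_n) : mxf n M i j = M i j.
Proof. by rewrite /mxf !valK. Qed.

Lemma mxf_out n (M : 'M[V]_n) a b : (n <= a)%N || (n <= b)%N -> mxf n M a b = 0.
Proof.
rewrite /mxf => /orP [Ha|Hb].
  by rewrite insubN // -leqNgt.
by case: (insub a) => // i; rewrite insubN // -leqNgt.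
Qed.

Definition uu J a b := mxf (NN J) (UU J) a b.

Lemma NN_mono i j : (i <= j)%N -> (NN i <= NN j)%N.
Proof.
elim: j => [|j IH]; first by rewrite leqn0 => /eqP ->.
rewrite leq_eqVlt => /orP [/eqP -> //|]; rewrite ltnS => /IH H.
by apply: leq_trans H _; rewrite /= leq_addr.
Qed.

Lemma uu_lo J (a b : 'I_(NN J)) : uu J.+1 a b = uu J a b.
Proof.
rewrite /uu (mxf_E (NN J.+1) (UU J.+1) (lshift (nn J) a) (lshift (nn J) b)) /=.
by rewrite block_mxEul mxf_E.
Qed.

Lemma uu_hi J (a b : 'I_(nn J)) : uu J.+1 (NN J + a) (NN J + b) = Xb J a b.
Proof.
rewrite /uu (mxf_E (NN J.+1) (UU J.+1) (rshift (NN J) a) (rshift (NN J) b)) /=.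
by rewrite block_mxEdr.
Qed.

Lemma uu_out J a b : (NN J <= a)%N || (NN J <= b)%N -> uu J a b = 0.
Proof. exact: mxf_out. Qed.

Lemma uu_stable J j a b : (J <= j)%N -> (a < NN J)%N -> (b < NN J)%N -> uu j a b = uu J a b.
Proof.
move=> + Ha Hb; elim: j => [|j IH]; first by rewrite leqn0 => /eqP ->.
rewrite leq_eqVlt => /orP [/eqP -> //|]; rewrite ltnS => HJ.
have Ha' : (a < NN j)%N by apply: leq_trans Ha (NN_mono _ _ HJ).
have Hb' : (b < NN j)%N by apply: leq_trans Hb (NN_mono _ _ HJ).
by rewrite -(IH HJ) (uu_lo j (Ordinal Ha') (Ordinal Hb')).
Qed.

Lemma uu_mix1 J (a : 'I_(NN J)) (b : 'I_(nn J)) : uu J.+1 a (NN J + b) = 0.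
Proof.
rewrite /uu (mxf_E (NN J.+1) (UU J.+1) (lshift (nn J) a) (rshift (NN J) b)) /=.
by rewrite block_mxEur mxE.
Qed.

Lemma uu_mix2 J (a : 'I_(nn J)) (b : 'I_(NN J)) : uu J.+1 (NN J + a) b = 0.
Proof.
rewrite /uu (mxf_E (NN J.+1) (UU J.+1) (rshift (NN J) a) (lshift (nn J) b)) /=.
by rewrite block_mxEdl mxE.
Qed.

Lemma trunc_step i j : (i <= j)%N ->
  trunc (NN j.+1) (fun a b => uu i a b - uu j.+1 a b) =
  block_mx (trunc (NN j) (fun a b => uu i a b - uu j a b)) 0 0 (- Xb j).
Proof.
move=> Hij; have Hn := NN_mono _ _ Hij.
apply/matrixP => a b; rewrite -(splitK a) -(splitK b).
case: (fintype.split a) => a'; case: (fintype.split b) => b'.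
- by rewrite block_mxEul !mxE /= uu_lo.
- rewrite block_mxEur !mxE /= uu_mix1 uu_out ?subr0 //.
  have H1 : (NN i <= NN j + b')%N := leq_trans Hn (leq_addr _ _).
  by rewrite H1 orbT.
- rewrite block_mxEdl !mxE /= uu_mix2 uu_out ?subr0 //.
  by rewrite (leq_trans Hn) ?leq_addr.
- rewrite block_mxEdr !mxE /= uu_hi uu_out ?sub0r.
    by rewrite /Xb /EE !mxE.
  by rewrite (leq_trans Hn) ?leq_addr.
Qed.

Definition Cst : R := 2 * (LL * (Mb + 1) + 1) + 20.
Definition rho l : R := Cst * ee l.

Lemma ee_anti i j : (i <= j)%N -> ee j <= ee i.
Proof.
elim: j => [|j IH]; first by rewrite leqn0 => /eqP ->.
rewrite leq_eqVlt => /orP [/eqP -> //|]; rewrite ltnS => /IH H.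
apply: le_trans H; rewrite (ee_S j); have := ee_gt0 j.+1; lra.
Qed.

Lemma Cst_ge0 : 0 <= Cst.
Proof.
rewrite /Cst; have := LL_gt0; have := HMb0 => h1 h2.
have : 0 <= LL * (Mb + 1) by apply: mulr_ge0; [apply: ltW; exact: LL_gt0 | have := HMb0; lra].
lra.
Qed.

Lemma rho_anti i j : (i <= j)%N -> rho j <= rho i.
Proof. by move=> H; rewrite /rho ler_wpM2l ?Cst_ge0 ?ee_anti. Qed.

Lemma rho_ge0 l : 0 <= rho l.
Proof. by rewrite /rho mulr_ge0 ?Cst_ge0 ?ltW ?ee_gt0. Qed.

Lemma ee_inv l : 2 ^+ l * ee l = 1.
Proof. by rewrite /ee mulfV // expf_neq0 // pnatr_eq0. Qed.

Lemma bc_bound l : bb l * cc l <= rho l.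
Proof.
case: (q_prop l) => a0 b0 ab _ _.
have hL := lam_LL; have hL0 := LL_gt0.
have hab : aa l * bb l * BB l <= LL * BB l.
  by rewrite ler_wpM2r ?BB_ge0 // ltW // (lt_le_trans ab).
have e0 := ee_gt0 l; have e1 := ee_le1 l.
have hbd : bb l * dd l <= ee l ^+ 3.
  rewrite /dd mulrA ler_pdivrMr ?ltr_wpDl //.
  have : 0 <= ee l ^+ 3 by rewrite exprn_ge0 ?ltW.
  nra.
have E : bb l * cc l = 2 * 2 ^+ l * (aa l * bb l * BB l + bb l * dd l).
  by rewrite /cc exprS; ring.
rewrite E /rho.
have hx := ee_inv l.
have x0 : 0 < 2 ^+ l :> R by rewrite exprn_gt0.
case: l a0 b0 ab hab hbd E e0 e1 hx x0 => [|l] a0 b0 ab hab hbd E e0 e1 hx x0.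
  move: hab hbd; rewrite /BB /ee expr0 invr1 expr1n /Cst => hab hbd.
  lra.
have hB : LL * BB l.+1 <= 9 * ee l.+1 ^+ 3.
  rewrite /BB /eps (ee_S l) -mulrDl.
  have h3 : 0 <= ee l.+1 ^+ 3 by rewrite exprn_ge0 ?ltW.
  rewrite mulrA ler_pdivrMr ?ltr_wpDl ?ltW //.
  nra.
have h1 : aa l.+1 * bb l.+1 * BB l.+1 + bb l.+1 * dd l.+1 <= 10 * ee l.+1 ^+ 3 by lra.
apply: le_trans (_ : 2 * 2 ^+ l.+1 * (10 * ee l.+1 ^+ 3) <= _).
  by rewrite ler_wpM2l // mulr_ge0 // ltW.
have -> : 2 * 2 ^+ l.+1 * (10 * ee l.+1 ^+ 3) = 20 * (2 ^+ l.+1 * ee l.+1) * ee l.+1 ^+ 2.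
  by ring.
rewrite hx mulr1.
have h2 : ee l.+1 ^+ 2 <= ee l.+1.
  by rewrite expr2; nra.
have : 0 <= LL * (Mb + 1) by apply: mulr_ge0; [apply: ltW; exact: LL_gt0 | have := HMb0; lra].
rewrite /Cst; nra.
Qed.

Lemma trunc_zero i : trunc (NN i) (fun a b => uu i a b - uu i a b) = 0.
Proof. by apply/matrixP => a b; rewrite !mxE subrr. Qed.

Lemma D_bound i j : (i <= j)%N ->
  mn (NN j) (trunc (NN j) (fun a b => uu i a b - uu j a b)) <= rho i.
Proof.
elim: j => [|j IH].
  by rewrite leqn0 => /eqP ->; rewrite trunc_zero (mn0 Hos) rho_ge0.
rewrite leq_eqVlt => /orP [/eqP ->|]; first by rewrite trunc_zero (mn0 Hos) rho_ge0.
rewrite ltnS => Hij.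
rewrite (trunc_step i j Hij) (mn_block Hos) ge_max (IH Hij) /= (mn_opp Hos).
apply: le_trans (Xb_bound j) _; apply: le_trans (bc_bound j) _.
exact: rho_anti.
Qed.

Lemma ee_small x : 0 < x -> exists J, ee J < x.
Proof.
move=> x0; have xi : 0 < x^-1 by rewrite invr_gt0.
have := archi_boundP (ltW xi).
set N := Num.bound _ => HN; exists N.
have H2 : (N%:R : R) < 2 ^+ N.
  by rewrite -natrX ltr_nat ltn_expl.
rewrite /ee invf_plt ?posrE ?exprn_gt0 //.
exact: lt_trans HN H2.
Qed.

Lemma KV : KV_seq mn NN uu.
Proof.
split; first by move=> j a b; apply: uu_out.
move=> e e0.
have C1 : 0 < Cst + 1 by have := Cst_ge0; lra.
have [J HJ] := ee_small _ (divr_gt0 e0 C1).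
have HJ' : forall l, (J <= l)%N -> rho l < e.
  move=> l Hl; apply: le_lt_trans (rho_anti J l Hl) _.
  rewrite /rho; move: HJ; rewrite ltr_pdivlMr // => HJ.
  have := ee_gt0 J; have := Cst_ge0; nra.
exists J => i j Hi Hj.
case: (leqP i j) => Hij.
  rewrite (maxn_idPr (NN_mono _ _ Hij)).
  by apply: le_lt_trans (D_bound i j Hij) (HJ' i Hi).
have Hji := ltnW Hij.
rewrite (maxn_idPl (NN_mono _ _ Hji)).
have -> : trunc (NN i) (fun a b => uu i a b - uu j a b) =
   - trunc (NN i) (fun a b => uu j a b - uu i a b).
  by apply/matrixP => a b; rewrite !mxE opprB.
rewrite (mn_opp Hos).
by apply: le_lt_trans (D_bound j i Hji) (HJ' j Hj).
Qed.

Lemma slice_step J k (sg : 'M['M[C]_(NN J)]_k) (tau : 'M['M[C]_(nn J)]_k) :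
  let B := \matrix_(p, q) (((cc J)^-1)%:C%C *: tau p q) in
  slice (\matrix_(p, q) block_mx (sg p q) 0 0 (B p q)) (uu J.+1) =
  slice sg (uu J) + map_mx (qm J) tau.
Proof.
move=> B; apply/matrixP => p q; rewrite !mxE big_split_ord /=.
congr (_ + _).
  apply: eq_bigr => a _; rewrite big_split_ord /=.
  rewrite [X in _ + X]big1 ?addr0 => [|b _]; last by rewrite block_mxEur mxE scale0r.
  by apply: eq_bigr => b _; rewrite block_mxEul uu_lo.
rewrite [in RHS](matrix_sum_delta (tau p q)) linear_sum /=.
apply: eq_bigr => a _; rewrite big_split_ord /=.
rewrite [X in X + _]big1 ?add0r => [|b _]; last by rewrite block_mxEdl mxE scale0r.
rewrite linear_sum /=; apply: eq_bigr => b _.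
rewrite block_mxEdr !mxE uu_hi Xb_E linearZ /= scalerA.
have c1 : ((cc J)%:C%C : C) * ((cc J)^-1)%:C%C = 1.
  by rewrite -rmorphM /= mulfV ?(gt_eqF (cc_gt0 J)).
by rewrite mulrA c1 mul1r linearZ.
Qed.

Lemma span_tt_le l l' : (l <= l')%N -> Defs.span (tq l) `<=` Defs.span (tq l').
Proof.
elim: l' => [|l' IH]; first by rewrite leqn0 => /eqP ->.
rewrite leq_eqVlt => /orP [/eqP -> //|]; rewrite ltnS => /IH H.
by move=> v /H /span_tt.
Qed.

Lemma eps_le1 l : eps l <= 1.
Proof.
rewrite /eps ler_pdivrMr ?mul1r; last by have := LL_gt0; lra.
have h1 := ee_le1 l; have h0 := ee_gt0 l; have := LL_gt0.
have : ee l ^+ 3 <= 1 by rewrite exprn_ile1 // ltW.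
lra.
Qed.

Lemma hull k (y : 'M[V]_k) : K k y -> in_hull_closure mn uu y.
Proof.
move=> Hy.
have : forall l, exists zl : 'M[V]_k,
    (forall i j, Defs.span (Sq l) (zl i j)) /\ mn k (y - zl) < eps l.
  by move=> l; exact: Sq_prop.
move=> /choice [z Hz].
pose zz l : 'M[V]_k := if l is l'.+1 then z l' else 0.
pose w l := z l - zz l.
have Hw_span : forall l i j, Defs.span (tq l) (w l i j).
  move=> l i j; rewrite /w !mxE; apply: spanB.
    by apply: span_St; case: (Hz l) => H _; apply: H.
  case: l => [|l] /=; first by rewrite mxE; apply: span0.
  by apply: span_tt; apply: span_St; case: (Hz l) => H _; apply: H.
have Hw_bd : forall l, mn k (w l) <= BB l.
  case=> [|l] /=.
    rewrite /w /= subr0.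
    have -> : z 0%N = y - (y - z 0%N) by rewrite opprB addrCA subrr addr0.
    apply: le_trans (mn_sub Hos _ _) _; apply: lerD; first exact: HMb.
    by case: (Hz 0%N) => _ H; apply: le_trans (ltW H) (eps_le1 _).
  rewrite /w /=.
  have -> : z l.+1 - z l = (y - z l) - (y - z l.+1).
    by rewrite [in RHS]opprB [in RHS]addrC [in RHS]addrA subrK.
  apply: le_trans (mn_sub Hos _ _) _; apply: lerD.
    by case: (Hz l) => _ H; apply: ltW.
  by case: (Hz l.+1) => _ H; apply: ltW.
have Hind : forall J, exists sg : 'M['M[C]_(NN J)]_k,
    normMT sg <= 1 - ee J /\ slice sg (uu J) = zz J.
  elim=> [|J [sg [Hn Hs]]].
    exists 0; split.
      by rewrite /ee expr0 invr1 subrr; apply: normMT_0.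
    by apply/matrixP => p q; rewrite !mxE big_ord0.
  case: (q_prop J) => a0 b0 _ _ Hlift.
  have [tau [Htau Hntau]] := Hlift k (w J) (Hw_span J) (dd J) (dd_gt0 J).
  pose B := \matrix_(p, q) (((cc J)^-1)%:C%C *: tau p q).
  exists (\matrix_(p, q) block_mx (sg p q) 0 0 (B p q)); split.
    apply: le_trans (normMT_block _ _) _.
    have c0 := cc_gt0 J.
    have HB : normMT B <= (cc J)^-1 * normMT tau.
      by apply: normMT_scale; rewrite invr_ge0 ltW.
    have Ht : normMT tau <= aa J * BB J + dd J.
      apply: le_trans (ltW Hntau) _; rewrite lerD2r ler_wpM2l //.
    have Hc : (cc J)^-1 * (aa J * BB J + dd J) = ee J.+1.
      rewrite /cc /ee invfM -mulrA mulVf ?mulr1 //.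
      by rewrite gt_eqF // ltr_wpDl ?dd_gt0 // mulr_ge0 ?BB_ge0.
    have Ht' : (cc J)^-1 * normMT tau <= ee J.+1.
      by rewrite -Hc ler_wpM2l // invr_ge0 ltW.
    have := ee_S J; lra.
  by rewrite slice_step Hs Htau /w /= addrC subrK.
move=> e e0.
have [J HJ] := ee_small _ e0.
have [sg [Hn Hs]] := Hind J.+1.
exists (NN J.+1), sg; split.
  by apply: le_trans Hn _; have := ee_gt0 J.+1; lra.
exists J.+1 => j Hj.
have -> : slice sg (uu j) = slice sg (uu J.+1).
  apply/matrixP => p q; rewrite !mxE; apply: eq_bigr => a _; apply: eq_bigr => b _.
  by rewrite (uu_stable J.+1 j a b Hj).
rewrite Hs /= -(mn_opp Hos) opprB.
case: (Hz J) => _ H; apply: lt_le_trans H _.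
rewrite /eps ler_pdivrMr ?mul1r; last by have := LL_gt0; lra.
have h1 := ee_le1 J; have h0 := ee_gt0 J; have := LL_gt0.
have h2 : ee J * ee J <= 1 by nra.
have h3 : ee J ^+ 3 <= ee J by rewrite !exprS expr0 mulr1; nra.
nra.
Qed.

Lemma main_part : exists (N : nat -> nat) (u : nat -> nat -> nat -> V),
  KV_seq mn N u /\ forall k y, K k y -> in_hull_closure mn u y.
Proof. by exists NN, uu; split; [exact: KV | move=> k y; exact: hull]. Qed.

End Main.



Local Close Scope classical_set_scope.
Unset Implicit Arguments.

Theorem theorem6p4 (R : realType) (V : lmodType R[i])
    (mn : forall n, 'M[V]_n -> R) (Hos : is_opspace mn)
    (lam : R) (Hlam : subcoexact mn lam)
    (K : mxset V) (HK : completely_compact mn K) :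
  operator_compact mn K.
Proof.
case: HK => Hcl [M HM] Hcc.
have HMb0 : 0 <= `|M| by apply: normr_ge0.
have HMb : forall n x, K n x -> mn n x <= `|M|.
  by move=> n x Hx; apply: le_trans (HM n x Hx) (ler_norm M).
split => //.
exact: (main_part R V mn Hos lam Hlam K `|M| HMb0 HMb Hcc).
Qed.
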